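(* Let $f_1,f_2\in S_3$ be linearly independent. Then $\dim\big(\pi_{1,2}P_\xi([f_1,f_2])\big)=2$ for almost every $\xi\in\mathbb{R}^2$.
   Context: For $j\ge0$, $S_j$ is the real vector space of homogeneous polynomials of degree $j$ in the variables $r,s$ (so $S_0=[1]$, $S_1=[r,s]$, $S_2=[r^2,rs,s^2]$, $S_3=[r^3,r^2s,rs^2,s^3]$); $[\cdot]$ denotes linear span. For $\xi=(a,b)\in\mathbb{R}^2$ and a polynomial $f$, $P_\xi f$ is the second-order Taylor polynomial of $f$ at $\xi$: $P_\xi f(r,s)=f(\xi)+\partial_rf(\xi)(r-a)+\partial_sf(\xi)(s-b)+\frac12\partial_{rr}f(\xi)(r-a)^2+\partial_{rs}f(\xi)(r-a)(s-b)+\frac12\partial_{ss}f(\xi)(s-b)^2\in S_0\oplus S_1\oplus S_2$. $\pi_{1,2}$ is the projection of $S_0\oplus S_1\oplus S_2$ onto $S_1\oplus S_2$ along $S_0$. *)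

(* Defs.v *)
From HB Require Import structures.
From mathcomp Require Import all_boot all_order all_algebra.
From mathcomp Require Import all_classical all_reals all_analysis.
Set Implicit Arguments. Unset Strict Implicit. Unset Printing Implicit Defensive.
Import Order.TTheory GRing.Theory Num.Theory.
Local Open Scope ring_scope.

(* Real polynomials in the two variables r, s, represented as {poly {poly R}}:
   the outer indeterminate is s, the inner one (in the coefficients) is r. *)
Definition bipoly (R : realType) := {poly {poly R}}.

Section Bipoly.
Variable R : realType.

Definition cst (c : R) : bipoly R := c%:P%:P.
Definition var_r : bipoly R := ('X : {poly R})%:P.
Definition var_s : bipoly R := 'X.

Definition eval2 (p : bipoly R) (a b : R) : R := (p.[b%:P]).[a].

Definition dr (p : bipoly R) : bipoly R := map_poly (fun q : {poly R} => q^`()) p.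
Definition ds (p : bipoly R) : bipoly R := p^`().

Definition inS3 (f : bipoly R) : Prop :=
  exists c : 'I_4 -> R,
    f = \sum_(i < 4) cst (c i) * var_r ^+ (3 - i) * var_s ^+ i.

Definition taylor2 (a b : R) (f : bipoly R) : bipoly R :=
  cst (eval2 f a b)
  + cst (eval2 (dr f) a b) * (var_r - cst a)
  + cst (eval2 (ds f) a b) * (var_s - cst b)
  + cst (2^-1 * eval2 (dr (dr f)) a b) * (var_r - cst a) ^+ 2
  + cst (eval2 (dr (ds f)) a b) * ((var_r - cst a) * (var_s - cst b))
  + cst (2^-1 * eval2 (ds (ds f)) a b) * (var_s - cst b) ^+ 2.

(* pi_{1,2}: projection of S_0 + S_1 + S_2 onto S_1 + S_2 along S_0,
   i.e. removal of the constant term *)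
Definition pi12 (p : bipoly R) : bipoly R := p - cst (p`_0`_0).

(* g1, g2 are linearly independent over R, i.e. dim [g1, g2] = 2 *)
Definition lin_indep2 (g1 g2 : bipoly R) : Prop :=
  forall al be : R, cst al * g1 + cst be * g2 = 0 -> al = 0 /\ be = 0.

End Bipoly.

(* Main.v *)
Require Import Defs.
From HB Require Import structures.
From mathcomp Require Import all_boot all_order all_algebra.
From mathcomp Require Import all_classical all_reals all_analysis.
From mathcomp Require Import ring lra zify measurable_realfun.
Import Order.TTheory GRing.Theory Num.Theory.
Local Open Scope ring_scope.
Local Notation cst := Defs.cst.
Section Alg.
Variable R : realType.
Definition mon (c : R) (k j : nat) : bipoly R := (cst c * var_r R ^+ k * var_s R ^+ j : {poly {poly R}}).

Lemma dr_add (p q : bipoly R) : dr (p + q) = dr p + dr q.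
Proof. by apply/polyP => i; rewrite coefD !coef_map_id0 ?deriv0 // coefD derivD. Qed.

Lemma ds_add (p q : bipoly R) : ds (p + q) = ds p + ds q.
Proof. by rewrite /ds derivD. Qed.

Lemma eval2_add (p q : bipoly R) a b : eval2 (p + q) a b = eval2 p a b + eval2 q a b.
Proof. by rewrite /eval2 !hornerD. Qed.

Lemma dr_mon c k j : dr (mon c k j) = mon (c *+ k) k.-1 j.
Proof.
apply/polyP => i; rewrite coef_map_id0 ?deriv0 // /mon /cst /var_r /var_s.
rewrite !coefMXn; case: ifP => _; first by rewrite deriv0.
rewrite -!rmorphXn -!rmorphM !coefC; case: eqP => _; last by rewrite deriv0.
rewrite derivM derivC derivXn mul0r add0r.
by rewrite mulrnAr -mulrnAl rmorphMn. Qed.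

Lemma ds_mon c k j : ds (mon c k j) = mon (c *+ j) k j.-1.
Proof.
rewrite /ds /mon derivM derivXn /cst /var_r -rmorphXn -!rmorphM derivC mul0r add0r.
have -> : (c *+ j)%:P * 'X^k = (c%:P * 'X^k) *+ j by rewrite -mulrnAl rmorphMn.
by rewrite /var_s rmorphMn mulrnAr mulrnAl.
Qed.

Lemma eval2_mon c k j a b : eval2 (mon c k j) a b = c * a ^+ k * b ^+ j.
Proof. by rewrite /eval2 /mon /cst /var_r /var_s !hornerE. Qed.


Lemma coef_mon c k j i l : (mon c k j)`_i`_l = if (i == j) && (l == k) then c else 0.
Proof.
rewrite /mon /cst /var_r /var_s -!rmorphXn -!rmorphM coefMXn.
case: ltnP => hij.
  by rewrite coef0 (_ : i == j = false) //; apply/negbTE; rewrite neq_ltn hij.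
rewrite coefC; case: eqP => hi.
  have -> : i = j by move: hi hij; lia.
  by rewrite eqxx /= coefCM coefXn; case: eqP => /= _; rewrite ?mulr1 ?mulr0.
by rewrite coef0 (_ : i == j = false) //; apply/negbTE; apply/eqP; lia.
Qed.

Lemma coef_add (p q : bipoly R) i l : (p + q)`_i`_l = p`_i`_l + q`_i`_l.
Proof. by rewrite !coefD. Qed.

Lemma shape6 (E0 E1 E2 E3 E4 E5 a b : R) :
  (cst E0 + cst E1 * (var_r R - cst a) + cst E2 * (var_s R - cst b)
  + cst E3 * (var_r R - cst a) ^+ 2 + cst E4 * ((var_r R - cst a) * (var_s R - cst b))
  + cst E5 * (var_s R - cst b) ^+ 2 : {poly {poly R}}) =
  mon (E0 - E1 * a - E2 * b + E3 * a ^+ 2 + E4 * a * b + E5 * b ^+ 2) 0 0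
  + mon (E1 - 2 * E3 * a - E4 * b) 1 0 + mon (E2 - E4 * a - 2 * E5 * b) 0 1
  + mon E3 2 0 + mon E4 1 1 + mon E5 0 2.
Proof. rewrite /mon /cst. ring. Qed.


Lemma inS3E (f : bipoly R) : inS3 f ->
  exists c0 c1 c2 c3, f = mon c0 3 0 + mon c1 2 1 + mon c2 1 2 + mon c3 0 3.
Proof.
case=> c ->; rewrite !big_ord_recl big_ord0 addr0 /=.
by do 4 eexists; rewrite /mon !addrA.
Qed.

Lemma coef_sub (p q : bipoly R) i l : (p - q)`_i`_l = p`_i`_l - q`_i`_l.
Proof. by rewrite !coefB. Qed.

Lemma coef_cst c i l : (cst c : bipoly R)`_i`_l = if (i == 0%N) && (l == 0%N) then c else 0.
Proof. rewrite /cst !coefC; case: (i == 0%N) => /=; rewrite ?coef0 ?coefC //. Qed.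

Lemma pi12_coef (f : bipoly R) c0 c1 c2 c3 a b :
  f = mon c0 3 0 + mon c1 2 1 + mon c2 1 2 + mon c3 0 3 ->
  [/\ (pi12 (taylor2 a b f))`_0`_2 = 3 * c0 * a + c1 * b,
      (pi12 (taylor2 a b f))`_1`_1 = 2 * c1 * a + 2 * c2 * b &
      (pi12 (taylor2 a b f))`_2`_0 = c2 * a + 3 * c3 * b].
Proof.
move=> ->; rewrite /pi12 /taylor2 shape6.
rewrite !coef_sub !coef_add !coef_mon !coef_cst /=.
rewrite !(dr_add, ds_add, dr_mon, ds_mon, eval2_add, eval2_mon) /=.
by split; field.
Qed.


Lemma coef_comb (al be : R) (g1 g2 : bipoly R) i l :
  (cst al * g1 + cst be * g2 : bipoly R)`_i`_l = al * g1`_i`_l + be * g2`_i`_l.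
Proof. by rewrite /cst !coefD !coefCM. Qed.

Lemma minor0 (al be x1 y1 x2 y2 : R) : al * x1 + be * x2 = 0 -> al * y1 + be * y2 = 0 ->
  ~ (al = 0 /\ be = 0) -> x1 * y2 - y1 * x2 = 0.
Proof.
move=> h1 h2 nz.
have ea : al * (x1 * y2 - y1 * x2) = 0.
  have -> : al * (x1 * y2 - y1 * x2) = (al * x1 + be * x2) * y2 - (al * y1 + be * y2) * x2 by ring.
  by rewrite h1 h2; ring.
have eb : be * (x1 * y2 - y1 * x2) = 0.
  have -> : be * (x1 * y2 - y1 * x2) = x1 * (al * y1 + be * y2) - y1 * (al * x1 + be * x2) by ring.
  by rewrite h1 h2; ring.
have [a0|a0] := eqVneq al 0.
  have [b0|b0] := eqVneq be 0; first by exfalso; apply: nz.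
  by move/eqP: eb; rewrite mulf_eq0 (negbTE b0) => /eqP.
by move/eqP: ea; rewrite mulf_eq0 (negbTE a0) => /eqP.
Qed.

Lemma dep (f1 f2 : bipoly R) c0 c1 c2 c3 d0 d1 d2 d3 :
  f1 = mon c0 3 0 + mon c1 2 1 + mon c2 1 2 + mon c3 0 3 ->
  f2 = mon d0 3 0 + mon d1 2 1 + mon d2 1 2 + mon d3 0 3 ->
  c0 * d1 - c1 * d0 = 0 -> c0 * d2 - c2 * d0 = 0 -> c0 * d3 - c3 * d0 = 0 ->
  c1 * d2 - c2 * d1 = 0 -> c1 * d3 - c3 * d1 = 0 -> c2 * d3 - c3 * d2 = 0 ->
  ~ lin_indep2 f1 f2.
Proof.
move=> e1 e2 p01 p02 p03 p12 p13 p23 H.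
have comb : forall al be, al * c0 + be * d0 = 0 -> al * c1 + be * d1 = 0 ->
    al * c2 + be * d2 = 0 -> al * c3 + be * d3 = 0 -> cst al * f1 + cst be * f2 = 0.
  move=> al be h0 h1 h2 h3; rewrite e1 e2.
  have -> : cst al * (mon c0 3 0 + mon c1 2 1 + mon c2 1 2 + mon c3 0 3)
     + cst be * (mon d0 3 0 + mon d1 2 1 + mon d2 1 2 + mon d3 0 3) =
     mon (al * c0 + be * d0) 3 0 + mon (al * c1 + be * d1) 2 1
     + mon (al * c2 + be * d2) 1 2 + mon (al * c3 + be * d3) 0 3.
    by rewrite /mon /cst; ring.
  by rewrite h0 h1 h2 h3 /mon /cst !rmorph0 !mul0r !addr0.
have [_ k0] : d0 = 0 /\ - c0 = 0 by apply: H; apply: comb; lra.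
have [_ k1] : d1 = 0 /\ - c1 = 0 by apply: H; apply: comb; lra.
have [_ k2] : d2 = 0 /\ - c2 = 0 by apply: H; apply: comb; lra.
have [_ k3] : d3 = 0 /\ - c3 = 0 by apply: H; apply: comb; lra.
have f10 : f1 = 0.
  have z0 : c0 = 0 by lra.
  have z1 : c1 = 0 by lra.
  have z2 : c2 = 0 by lra.
  have z3 : c3 = 0 by lra.
  rewrite e1 z0 z1 z2 z3.
  by rewrite /mon /cst !rmorph0 !mul0r !addr0.
have h : cst 1 * f1 + cst 0 * f2 = 0 by rewrite f10 /cst !rmorph0 mulr0 mul0r addr0.
have [h10 _] := H 1 0 h.
by move/eqP: h10; rewrite oner_eq0.
Qed.
End Alg.
Arguments pi12_coef {R f c0 c1 c2 c3} a b.
Arguments minor0 {R al be x1 y1 x2 y2}.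
Arguments dep {R f1 f2 c0 c1 c2 c3 d0 d1 d2 d3}.
Arguments inS3E {R f}.

Local Open Scope classical_set_scope.

Lemma roots_finite (R : realType) (p : {poly R}) : p != 0 -> finite_set [set x | root p x].
Proof.
have [n] := ubnP (size p); elim: n p => [|n IH] p; first by rewrite ltn0.
move=> hs p0; have [[z rz]|nr] := pselect (exists z, root p z); last first.
  rewrite (_ : [set x | root p x] = set0); first exact: finite_set0.
  by apply/seteqP; split => x //= rx; apply: nr; exists x.
have /factor_theorem [q pq] := rz.
have q0 : q != 0 by apply: contraNneq p0 => q0; rewrite pq q0 mul0r.
apply: (sub_finite_set (B := [set x | root q x] `|` [set z])).
  by move=> x /=; rewrite pq rootM root_XsubC => /orP[->|/eqP ->]; [left|right].
rewrite finite_setU; split; last exact: finite_set1.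
apply: (IH q _ q0); move: hs; rewrite pq size_Mmonic ?monicXsubC //; have := size_XsubC z.
move=> ->; rewrite addn2 /=; lia.
Qed.

Lemma quad_neg {R : realType} {A B C : R} : ~ (A = 0 /\ B = 0 /\ C = 0) ->
  ((@lebesgue_measure R) \x (@lebesgue_measure R))%E.-negligible
   [set xi : R * R | A * xi.1 ^+ 2 + B * xi.1 * xi.2 + C * xi.2 ^+ 2 = 0].
Proof.
move=> nz.
pose q := fun xi : measurableTypeR R * measurableTypeR R => A * xi.1 ^+ 2 + B * xi.1 * xi.2 + C * xi.2 ^+ 2.
have mq : measurable_fun setT q.
  rewrite /q; apply: measurable_funD; first apply: measurable_funD.
  - apply: measurable_funM => //; apply: measurable_funX; exact: measurable_fst.
  - apply: (measurable_funM (f := fun xi : measurableTypeR R * measurableTypeR R => B * xi.1) (g := snd)); last exact: measurable_snd.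
    apply: measurable_funM => //; exact: measurable_fst.
  - apply: measurable_funM => //; apply: measurable_funX; exact: measurable_snd.
pose N1 : set (measurableTypeR R * measurableTypeR R) := [set 0] `*` setT.
pose N2 : set (measurableTypeR R * measurableTypeR R) := (setT `&` q @^-1` [set 0]) `&` ~` N1.
have mN1 : measurable N1 by apply: measurableX => //; exact: measurable_set1.
have mN2 : measurable N2.
  apply: measurableI; first exact: mq _ (measurable_set1 _).
  exact: measurableC.
apply: (@negligibleS _ _ _ ((@lebesgue_measure R) \x (@lebesgue_measure R))%E (N1 `|` N2)).
  move=> [x y] /= hq; have [x0|x0] := eqVneq x 0.
    by left; rewrite /N1 /=; split.
  by right; rewrite /N2 /N1 /=; split; [split|move=> [/= x00]; rewrite x00 eqxx in x0].
apply: negligibleU.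
  exists N1; split => //.
  have h := (@product_measure1E _ _ _ _ R (@lebesgue_measure R) (@lebesgue_measure R) [set 0] setT (measurable_set1 _) measurableT).
  apply: (eq_trans h); rewrite [X in (X * _)%E](_ : _ = 0%E) ?mul0e //; exact: lebesgue_measure_set1.
exists N2; split => //.
rewrite /product_measure1; apply: integral0_eq => x _ /=.
have [->|x0] := eqVneq x 0.
  rewrite (_ : xsection N2 0 = set0) ?measure0 //.
  by apply/seteqP; split => y //; rewrite /xsection /= inE => -[_ []].
apply: countable_lebesgue_measure0; apply: finite_set_countable.
pose P : {poly R} := C%:P * 'X^2 + (B * x)%:P * 'X + (A * x ^+ 2)%:P.
apply: (sub_finite_set (B := [set y | root P y])).
  move=> y; rewrite /xsection /= inE => -[[_ hq] _].
  rewrite /root /P !hornerE; apply/eqP; rewrite -[RHS]hq /q /=; ring.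
apply: roots_finite; apply/negP => /eqP P0; apply: nz.
have c0 := congr1 (fun p : {poly R} => p`_0) P0.
have c1 := congr1 (fun p : {poly R} => p`_1) P0.
have c2 := congr1 (fun p : {poly R} => p`_2) P0.
move: c0 c1 c2; rewrite /P /= !coefE /= !mulr0 !mulr1 !addr0 !add0r => c0 c1 c2.
split; [|split] => //.
  by move/eqP: c0; rewrite mulf_eq0 expf_eq0 (negbTE x0) andbF orbF => /eqP.
by move/eqP: c1; rewrite mulf_eq0 (negbTE x0) orbF => /eqP.
Qed.

Theorem lemma7p2 (R : realType) (f1 f2 : bipoly R) :
  inS3 f1 -> inS3 f2 -> lin_indep2 f1 f2 ->
  ((@lebesgue_measure R) \x (@lebesgue_measure R))%E.-negligible
    [set xi : R * R |
      ~ lin_indep2 (pi12 (taylor2 xi.1 xi.2 f1)) (pi12 (taylor2 xi.1 xi.2 f2))].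
Proof.
move=> /inS3E [c0 [c1 [c2 [c3 e1]]]] /inS3E [d0 [d1 [d2 [d3 e2]]]] ind.
pose A1 := 6 * (c0 * d1 - c1 * d0). pose B1 := 6 * (c0 * d2 - c2 * d0).
pose C1 := 2 * (c1 * d2 - c2 * d1).
pose A2 := 2 * (c1 * d2 - c2 * d1). pose B2 := 6 * (c1 * d3 - c3 * d1).
pose C2 := 6 * (c2 * d3 - c3 * d2).
pose A3 := 3 * (c0 * d2 - c2 * d0).
pose B3 := 9 * (c0 * d3 - c3 * d0) + (c1 * d2 - c2 * d1).
pose C3 := 3 * (c1 * d3 - c3 * d1).
have key : forall a b : R,
  ~ lin_indep2 (pi12 (taylor2 a b f1)) (pi12 (taylor2 a b f2)) ->
  [/\ A1 * a ^+ 2 + B1 * a * b + C1 * b ^+ 2 = 0,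
      A2 * a ^+ 2 + B2 * a * b + C2 * b ^+ 2 = 0 &
      A3 * a ^+ 2 + B3 * a * b + C3 * b ^+ 2 = 0].
  move=> a b nb.
  have [al [be [hab nz]]] : exists al be,
      cst al * pi12 (taylor2 a b f1) + cst be * pi12 (taylor2 a b f2) = 0
      /\ ~ (al = 0 /\ be = 0).
    apply: contrapT => hn; apply: nb => al be e; apply: contrapT => nab.
    by apply: hn; exists al, be.
  have [x1 y1 z1] := pi12_coef a b e1.
  have [x2 y2 z2] := pi12_coef a b e2.
  have hx := congr1 (fun p : bipoly R => p`_0`_2) hab.
  have hy := congr1 (fun p : bipoly R => p`_1`_1) hab.
  have hz := congr1 (fun p : bipoly R => p`_2`_0) hab.
  move: hx hy hz; rewrite /= !coef_comb !coef0 x1 y1 z1 x2 y2 z2 => hx hy hz.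
  have mxy := minor0 hx hy nz.
  have myz := minor0 hy hz nz.
  have mxz := minor0 hx hz nz.
  split.
  - by rewrite -mxy /A1 /B1 /C1; ring.
  - by rewrite -myz /A2 /B2 /C2; ring.
  - by rewrite -mxz /A3 /B3 /C3; ring.
have [nz1|z1] := pselect (~ (A1 = 0 /\ B1 = 0 /\ C1 = 0)).
  apply: negligibleS (quad_neg nz1) => -[a b] /= nb; by case: (key a b nb).
have [nz2|z2] := pselect (~ (A2 = 0 /\ B2 = 0 /\ C2 = 0)).
  apply: negligibleS (quad_neg nz2) => -[a b] /= nb; by case: (key a b nb).
have [nz3|z3] := pselect (~ (A3 = 0 /\ B3 = 0 /\ C3 = 0)).
  apply: negligibleS (quad_neg nz3) => -[a b] /= nb; by case: (key a b nb).
move/contrapT: z1 => [hA1 [hB1 hC1]].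
move/contrapT: z2 => [hA2 [hB2 hC2]].
move/contrapT: z3 => [hA3 [hB3 hC3]].
exfalso; apply: (dep e1 e2 _ _ _ _ _ _ ind).
- by move: hA1; rewrite /A1; lra.
- by move: hB1; rewrite /B1; lra.
- by move: hB3 hC1; rewrite /B3 /C1; lra.
- by move: hC1; rewrite /C1; lra.
- by move: hB2; rewrite /B2; lra.
- by move: hC2; rewrite /C2; lra.
Qed.
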